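(* Let $(X,\mathrm{dist})$ be a metric space with doubling dimension $\gamma$, let $P\subseteq X$ be a set of $n$ points with aspect ratio $\alpha$, and let $s>1$. Let $G$ be the final graph of the uncoordinated construction (described in the context) on $P$ with parameter $s$. Then $G$ is a spanner with stretch factor $(s+1)/(s-1)$ (for all $p,q\in P$ the shortest path length in $G$ is at most $\frac{s+1}{s-1}\mathrm{dist}(p,q)$), has total edge weight $O(\gamma^9\cdot\lg\alpha\cdot|\mathrm{MST}|\cdot s^{O(\gamma)})$, has $O(\gamma^4\cdot n\cdot s^{O(\gamma)})$ edges, has maximum degree $O(\gamma^4\cdot\lg\alpha\cdot s^{O(\gamma)})$ and average degree $O(\gamma^4\cdot s^{O(\gamma)})$.
   Context: The doubling dimension of a metric space $(X,\mathrm{dist})$ is the smallest $\gamma$ such that every ball of radius $R$ can be covered by at most $2^\gamma$ balls of radius $R/2$; here $\gamma$ is a constant. $\lg$ is logarithm base 2. The aspect ratio is $\alpha=\max_{u,v\in P}\mathrm{dist}(u,v)/\min_{u\ne v\in P}\mathrm{dist}(u,v)$; $|\mathrm{MST}|$ is the total weight of a minimum spanning tree of $P$ under $\mathrm{dist}$. Edges of $G$ are weighted by $\mathrm{dist}$ between endpoints. Uncoordinated construction: start with the graph $G$ on vertex set $P$ with no edges. Every ordered pair $(p,q)$ of distinct points of $P$ is processed exactly once, in an arbitrary order, one at a time. When $(p,q)$ is processed, the edge $pq$ is added to $G$ unless $G$ currently contains an edge whose endpoints can be labeled $p',q'$ with $\mathrm{dist}(p,p')\le \mathrm{dist}(p',q')/(2s+2)$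 and $\mathrm{dist}(q,q')\le \mathrm{dist}(p',q')/(2s+2)$. $G$ is the graph after all pairs are processed. *)

(* Defs.v *)
From Stdlib Require Import Reals Lra List ClassicalEpsilon.
Import ListNotations.
Open Scope R_scope.

Section Defs.
Variable X : Type.
Variable dist : X -> X -> R.

Definition is_metric : Prop :=
  (forall x y, 0 <= dist x y) /\
  (forall x y, dist x y = 0 <-> x = y) /\
  (forall x y, dist x y = dist y x) /\
  (forall x y z, dist x z <= dist x y + dist y z).

Definition is_doubling (g : R) : Prop :=
  forall (x : X) (Rad : R), 0 < Rad ->
    exists cs : list X,
      INR (length cs) <= Rpower 2 g /\
      forall y, dist x y <= Rad -> exists c, In c cs /\ dist c y <= Rad / 2.

Definition doubling_dimension (g : R) : Prop :=
  is_doubling g /\ forall g', is_doubling g' -> g <= g'.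

Definition lg (x : R) : R := ln x / ln 2.

Definition aspect_ratio (P : list X) (a : R) : Prop :=
  exists dmax dmin : R,
    (exists p q, In p P /\ In q P /\ p <> q /\ dist p q = dmax) /\
    (forall p q, In p P -> In q P -> p <> q -> dist p q <= dmax) /\
    (exists p q, In p P /\ In q P /\ p <> q /\ dist p q = dmin) /\
    (forall p q, In p P -> In q P -> p <> q -> dmin <= dist p q) /\
    a = dmax / dmin.

(* graphs on X are given by lists of edges (ordered pairs, read as undirected) *)
Definition adj (G : list (X * X)) (x y : X) : Prop :=
  In (x, y) G \/ In (y, x) G.

Inductive walk_len (G : list (X * X)) : X -> X -> R -> Prop :=
| walk_refl p : walk_len G p p 0
| walk_step p u q L : adj G p u -> walk_len G u q L -> walk_len G p q (dist p u + L).

Definition weight (G : list (X * X)) : R :=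
  fold_right (fun e acc => dist (fst e) (snd e) + acc) 0 G.

Definition spanning_tree (P : list X) (T : list (X * X)) : Prop :=
  (forall a b, In (a, b) T -> In a P /\ In b P /\ a <> b) /\
  length T = (length P - 1)%nat /\
  (forall p q, In p P -> In q P -> exists L, walk_len T p q L).

Definition mst_weight (P : list X) (w : R) : Prop :=
  (exists T, spanning_tree P T /\ weight T = w) /\
  (forall T, spanning_tree P T -> w <= weight T).

Definition blocked (s : R) (G : list (X * X)) (p q : X) : Prop :=
  exists a b, In (a, b) G /\
    ((dist p a <= dist a b / (2 * s + 2) /\ dist q b <= dist a b / (2 * s + 2)) \/
     (dist p b <= dist b a / (2 * s + 2) /\ dist q a <= dist b a / (2 * s + 2))).

Inductive run (s : R) : list (X * X) -> list (X * X) -> list (X * X) -> Prop :=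
| run_nil G : run s G [] G
| run_skip G p q rest G' :
    blocked s G p q -> run s G rest G' -> run s G ((p, q) :: rest) G'
| run_add G p q rest G' :
    ~ blocked s G p q -> run s (G ++ [(p, q)]) rest G' -> run s G ((p, q) :: rest) G'.

Definition valid_order (P : list X) (ord : list (X * X)) : Prop :=
  NoDup ord /\ forall p q, In (p, q) ord <-> (In p P /\ In q P /\ p <> q).

Definition degree (G : list (X * X)) (v : X) : nat :=
  length (filter (fun e => if excluded_middle_informative (fst e = v \/ snd e = v)
                           then true else false) G).

End Defs.

Arguments walk_len {X} dist G _ _ _.

(* Main.v *)
Require Import Defs.
From Stdlib Require Import Reals Lra Lia List ClassicalEpsilon Permutation.
Import ListNotations.
Open Scope R_scope.


Definition dec (P : Prop) : bool := if excluded_middle_informative P then true else false.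
Lemma decP (P : Prop) : dec P = true <-> P.
Proof. unfold dec; destruct (excluded_middle_informative P); split; intros; auto; discriminate. Qed.
Lemma decF (P : Prop) : dec P = false <-> ~ P.
Proof. unfold dec; destruct (excluded_middle_informative P); split; intros; auto; try discriminate; contradiction. Qed.

Definition sumR {A} (f : A -> R) (l : list A) : R := fold_right (fun a acc => f a + acc) 0 l.

Lemma sumR_nil {A} (f : A -> R) : sumR f [] = 0. Proof. reflexivity. Qed.
Lemma sumR_cons {A} (f : A -> R) a l : sumR f (a :: l) = f a + sumR f l. Proof. reflexivity. Qed.
Lemma sumR_app {A} (f : A -> R) l1 l2 : sumR f (l1 ++ l2) = sumR f l1 + sumR f l2.
Proof. induction l1; simpl; [lra|rewrite IHl1; lra]. Qed.
Lemma sumR_le {A} (f g : A -> R) l : (forall a, In a l -> f a <= g a) -> sumR f l <= sumR g l.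
Proof. induction l; simpl; intros; [lra|]. pose proof (H a (or_introl eq_refl)).
  assert (sumR f l <= sumR g l) by (apply IHl; auto). lra. Qed.
Lemma sumR_nonneg {A} (f : A -> R) l : (forall a, In a l -> 0 <= f a) -> 0 <= sumR f l.
Proof. induction l; simpl; intros; [lra|]. pose proof (H a (or_introl eq_refl)).
  assert (0 <= sumR f l) by (apply IHl; auto). lra. Qed.
Lemma sumR_const {A} (c : R) (l : list A) : sumR (fun _ => c) l = c * INR (length l).
Proof. induction l; simpl length; [simpl; lra|]. rewrite sumR_cons, IHl, S_INR. lra. Qed.
Lemma sumR_scale {A} (c : R) (f : A -> R) l : sumR (fun a => c * f a) l = c * sumR f l.
Proof. induction l; simpl; [lra|]. rewrite IHl. lra. Qed.
Lemma sumR_plus {A} (f g : A -> R) l : sumR (fun a => f a + g a) l = sumR f l + sumR g l.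
Proof. induction l; simpl; [lra|]. rewrite IHl. lra. Qed.
Lemma sumR_exchange {A B} (g : A -> B -> R) l1 l2 :
  sumR (fun a => sumR (g a) l2) l1 = sumR (fun b => sumR (fun a => g a b) l1) l2.
Proof. induction l1; simpl.
  - induction l2; simpl; [reflexivity|]. rewrite <- IHl2. lra.
  - rewrite IHl1. rewrite <- sumR_plus. reflexivity. Qed.
Lemma sumR_ext {A} (f g : A -> R) l : (forall a, In a l -> f a = g a) -> sumR f l = sumR g l.
Proof. induction l; simpl; intros; [reflexivity|]. rewrite H by auto. rewrite IHl; auto. Qed.

Arguments sumR : simpl never.
Definition indic (P : Prop) : R := if excluded_middle_informative P then 1 else 0.

Lemma length_filter_sum {A} (p : A -> bool) l : INR (length (filter p l)) = sumR (fun a => if p a then 1 else 0) l.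
Proof. induction l; simpl; [reflexivity|]. rewrite sumR_cons. destruct (p a); simpl length; try rewrite S_INR; lra. Qed.

Lemma count_partition {A B} (g : A -> B) (l : list A) (P : list B) :
  NoDup P -> (forall a, In a l -> In (g a) P) ->
  INR (length l) = sumR (fun z => INR (length (filter (fun a => dec (g a = z)) l))) P.
Proof.
  intros HP. induction l; intros H.
  - induction P; [reflexivity|]. inversion HP; subst. rewrite sumR_cons, <- IHP; [simpl; lra | auto | intros ? []].
  - assert (Hin : In (g a) P) by (apply H; left; reflexivity).
    assert (E : sumR (fun z => INR (length (filter (fun a0 => dec (g a0 = z)) (a :: l)))) P
       = sumR (fun z => (if dec (g a = z) then 1 else 0) + INR (length (filter (fun a0 => dec (g a0 = z)) l))) P).
    { apply sumR_ext. intros z _. simpl. destruct (dec (g a = z)); simpl length; try rewrite S_INR; lra. }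
    rewrite E, sumR_plus, <- IHl by (intros; apply H; right; auto). simpl length. rewrite S_INR.
    assert (sumR (fun z => if dec (g a = z) then 1 else 0) P = 1).
    { clear -HP Hin. induction P; [destruct Hin|]. inversion HP; subst. rewrite sumR_cons.
      destruct Hin as [->|Hin].
      + rewrite (proj2 (decP _) eq_refl). rewrite (sumR_ext _ (fun _ => 0)).
        * rewrite sumR_const. lra.
        * intros z Hz. destruct (dec (g a = z)) eqn:E; auto. apply (proj1 (decP _)) in E. subst. contradiction.
      + rewrite IHP; auto. destruct (dec (g a = a0)) eqn:E; [apply (proj1 (decP _)) in E; subst; contradiction | lra]. }
    lra.
Qed.

Lemma inj_count {A B} (F : A -> B) (l : list A) (m : list B) :
  NoDup l -> (forall a, In a l -> In (F a) m) -> (forall a b, In a l -> In b l -> F a = F b -> a = b) ->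
  (length l <= length m)%nat.
Proof.
  intros Hl Hm Hi. rewrite <- (length_map F l). apply NoDup_incl_length.
  - clear Hm. induction Hl; simpl; constructor.
    + intro H'. apply in_map_iff in H'. destruct H' as [y [E Hy]].
      assert (y = x) by (apply Hi; simpl; auto). subst. contradiction.
    + apply IHHl. intros; apply Hi; simpl; auto.
  - intros b Hb. apply in_map_iff in Hb. destruct Hb as [a [<- Ha]]. auto.
Qed.

Lemma filter_incl_length {A} (p : A -> bool) l : (length (filter p l) <= length l)%nat.
Proof. induction l; simpl; [lia|]. destruct (p a); simpl; lia. Qed.

Lemma NoDup_filter' {A} (p : A -> bool) l : NoDup l -> NoDup (filter p l).
Proof. apply NoDup_filter. Qed.


Section Run.
Variable X : Type.
Variable d : X -> X -> R.
Hypothesis Hm : is_metric X d.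

Lemma d_nonneg x y : 0 <= d x y. Proof. apply Hm. Qed.
Lemma d_refl x : d x x = 0. Proof. apply Hm. reflexivity. Qed.
Lemma d_sym x y : d x y = d y x. Proof. apply Hm. Qed.
Lemma d_tri x y z : d x z <= d x y + d y z. Proof. apply Hm. Qed.
Lemma d_pos x y : x <> y -> 0 < d x y.
Proof. intro H. destruct (d_nonneg x y) as [H'|H']; auto. exfalso. apply H. apply Hm. auto. Qed.

Variable s : R.
Hypothesis Hs : 1 < s.
Definition kk := 2 * s + 2.
Lemma kk_pos : 0 < kk. Proof. unfold kk; lra. Qed.

Definition len (e : X * X) := d (fst e) (snd e).
Definition close (r : R) (e f : X * X) : Prop :=
  (d (fst e) (fst f) <= r /\ d (snd e) (snd f) <= r) \/ (d (fst e) (snd f) <= r /\ d (snd e) (fst f) <= r).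

Definition Sep (G : list (X * X)) := forall A f B, G = A ++ f :: B -> ~ blocked X d s A (fst f) (snd f).

Lemma blocked_mono G G' p q : incl G G' -> blocked X d s G p q -> blocked X d s G' p q.
Proof. intros Hi [a [b [H1 H2]]]. exists a, b. split; auto. Qed.


Lemma app_last_split {A} (l1 : list A) f l2 l x :
  l1 ++ f :: l2 = l ++ [x] -> (l2 = [] /\ l1 = l /\ f = x) \/ (exists l2', l2 = l2' ++ [x] /\ l = l1 ++ f :: l2').
Proof.
  intro H. destruct l2 as [|y l2].
  - left. apply app_inj_tail in H. destruct H; subst; auto.
  - right. destruct (exists_last (l := y :: l2)) as [l2' [z Ez]]; [discriminate|].
    rewrite Ez in H. rewrite app_comm_cons, app_assoc in H. apply app_inj_tail in H.
    destruct H as [H1 H2]. subst. exists l2'. split; auto.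
Qed.

Lemma run_inv G0 ord G : run X d s G0 ord G ->
  (exists T, G = G0 ++ T) /\ (Sep G0 -> Sep G) /\
  (forall e, In e ord -> In e G \/ blocked X d s G (fst e) (snd e)) /\
  (forall e, In e G -> In e G0 \/ In e ord).
Proof.
  induction 1 as [G|G p q rest G' Hb Hr IH|G p q rest G' Hb Hr IH].
  - refine (conj _ (conj _ (conj _ _))); [exists []; rewrite app_nil_r; auto | auto | intros e [] | auto].
  - destruct IH as [[T ET] [IH2 [IH3 IH4]]]. split; [exists T; auto|]. split; auto. split.
    + intros e [<-|He]; auto. right. simpl. eapply blocked_mono; [|exact Hb]. rewrite ET. apply incl_appl, incl_refl.
    + intros e He. destruct (IH4 e He); auto. right; right; auto.
  - destruct IH as [[T ET] [IH2 [IH3 IH4]]]. split; [exists ((p,q) :: T); rewrite ET, <- app_assoc; auto|].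
    split; [|split].
    + intro HS. apply IH2. intros A f B E HB. symmetry in E; apply app_last_split in E.
      destruct E as [[_ [-> ->]]|[l2' [_ E]]]; [simpl in HB; contradiction|].
      apply (HS A f l2' E HB).
    + intros e [<-|He]; auto. left. rewrite ET. apply in_or_app; left; apply in_or_app; right; left; auto.
    + intros e He. destruct (IH4 e He) as [H|H]; [|right; right; auto].
      apply in_app_or in H. destruct H as [H|[<-|[]]]; auto. right; left; auto.
Qed.

Lemma close_sym r e f : close r e f -> close r f e.
Proof. unfold close. rewrite !(d_sym (fst f)), !(d_sym (snd f)). tauto. Qed.

Lemma close_blocked A e f r : In e A -> r <= len e / kk -> close r e f -> blocked X d s A (fst f) (snd f).
Proof.
  intros HA Hr Hc. exists (fst e), (snd e). destruct e as [a b]. simpl in *. split; auto.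
  unfold len, kk in Hr. simpl in Hr.
  destruct Hc as [[H1 H2]|[H1 H2]]; simpl in H1, H2.
  - left. rewrite d_sym in H1. rewrite d_sym in H2. split; lra.
  - right. rewrite (d_sym b a). rewrite d_sym in H1, H2. split; lra.
Qed.

Lemma Sep_conflict G e f r : Sep G -> In e G -> In f G -> e <> f ->
  r <= len e / kk -> r <= len f / kk -> ~ close r e f.
Proof.
  intros HS He Hf Hne Hre Hrf Hc. apply in_split in Hf. destruct Hf as [A [B EG]].
  assert (He' := He). rewrite EG in He'. apply in_app_or in He'. destruct He' as [HA|[Hef|HB]].
  - apply (HS A f B EG). eapply close_blocked; eauto.
  - congruence.
  - apply in_split in HB. destruct HB as [B1 [B2 EB]]. subst B.
    apply (HS (A ++ f :: B1) e B2). { rewrite EG, <- app_assoc. reflexivity. }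
    eapply close_blocked; [|eauto|]. apply in_or_app; right; left; auto. apply close_sym; auto.
Qed.

Lemma NoDup_from_split {A} (l : list A) : (forall l1 f l2, l = l1 ++ f :: l2 -> ~ In f l1) -> NoDup l.
Proof.
  induction l using rev_ind; intros H; [constructor|].
  apply Permutation_NoDup with (l := x :: l).
  - apply Permutation_cons_append.
  - constructor.
    + apply (H l x []). reflexivity.
    + apply IHl. intros l1 f l2 E. apply (H l1 f (l2 ++ [x])). rewrite E, <- app_assoc. reflexivity.
Qed.

Lemma Sep_NoDup G : Sep G -> NoDup G.
Proof.
  intro HS. apply NoDup_from_split. intros l1 f l2 E Hin. apply (HS l1 f l2 E).
  apply (close_blocked l1 f f 0); auto.
  - unfold len. apply Rmult_le_pos; [apply d_nonneg|]. left; apply Rinv_0_lt_compat, kk_pos.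
  - left. rewrite !d_refl. lra.
Qed.

Section Stretch.
Variable P : list X.
Variable ord G : list (X * X).
Hypothesis Hord : forall p q, In p P -> In q P -> p <> q -> In (p, q) ord.
Hypothesis HordP : forall e, In e ord -> In (fst e) P /\ In (snd e) P /\ fst e <> snd e.
Hypothesis Hcov : forall e, In e ord -> In e G \/ blocked X d s G (fst e) (snd e).
Hypothesis HG : forall e, In e G -> In e ord.

Definition mu (D : R) := length (filter (fun e => dec (len e < D)) ord).

Lemma filter_lt_len {A} (p q : A -> bool) l x : (forall a, p a = true -> q a = true) -> In x l -> q x = true -> p x = false ->
  (length (filter p l) < length (filter q l))%nat.
Proof.
  induction l; intros Hpq Hx Hq Hp; [destruct Hx|]. destruct Hx as [<-|Hx].
  - simpl. rewrite Hp, Hq. simpl. pose proof (filter_incl_length p l).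
    assert (forall l', length (filter p l') <= length (filter q l'))%nat.
    { induction l'; simpl; [lia|]. destruct (p a0) eqn:E; [rewrite (Hpq _ E); simpl; lia|]. destruct (q a0); simpl; lia. }
    specialize (H0 l). lia.
  - simpl. specialize (IHl Hpq Hx Hq Hp). destruct (p a) eqn:E; [rewrite (Hpq _ E); simpl; lia|]. destruct (q a); simpl; lia.
Qed.

Lemma mu_lt x y D : In (x, y) ord -> d x y < D -> (mu (d x y) < mu D)%nat.
Proof.
  intros Hin HD. unfold mu. apply (filter_lt_len _ _ _ (x, y)); auto.
  - intros a Ha. apply (proj1 (decP _)) in Ha. apply (proj2 (decP _)). lra.
  - apply (proj2 (decP _)). unfold len. simpl. auto.
  - apply (proj2 (decF _)). unfold len; simpl. lra.
Qed.

Lemma walk_app p a q L1 L2 : walk_len d G p a L1 -> walk_len d G a q L2 -> walk_len d G p q (L1 + L2).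
Proof.
  induction 1; intros H2. - replace (0 + L2) with L2 by lra. auto.
  - replace (d p u + L + L2) with (d p u + (L + L2)) by lra. constructor; auto.
Qed.

Definition tt := (s + 1) / (s - 1).
Lemma tt_ge1 : 1 <= tt.
Proof. unfold tt. apply Rmult_le_reg_r with (s - 1); [lra|]. unfold Rdiv. rewrite Rmult_assoc, Rinv_l; lra. Qed.

Lemma stretch_main : forall n p q, (mu (d p q) < n)%nat -> In p P -> In q P ->
  exists L, walk_len d G p q L /\ L <= tt * d p q.
Proof.
  induction n; intros p q Hn Hp Hq; [lia|].
  destruct (excluded_middle_informative (p = q)) as [<-|Hpq].
  { exists 0. split; [constructor|]. rewrite d_refl. lra. }
  assert (Hin := Hord p q Hp Hq Hpq).
  assert (IH' : forall x y, In x P -> In y P -> d x y < d p q -> exists L, walk_len d G x y L /\ L <= tt * d x y).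
  { intros x y Hx Hy Hxy. destruct (excluded_middle_informative (x = y)) as [<-|Hne].
    - exists 0. split; [constructor|]. rewrite d_refl. lra.
    - apply IHn; auto. pose proof (mu_lt x y (d p q) (Hord x y Hx Hy Hne) Hxy). lia. }
  pose proof tt_ge1 as Ht1.
  destruct (Hcov (p, q) Hin) as [HinG|[a [b [HabG Hcl]]]].
  - exists (d p q + 0). split.
    + apply walk_step; [left; auto|constructor].
    + pose proof (d_nonneg p q). nra.
  - simpl in Hcl. destruct (HordP _ (HG _ HabG)) as [Ha [Hb Hab]]. simpl in Ha, Hb, Hab.
    assert (HE := d_pos a b Hab). pose proof (d_pos p q Hpq) as HD.
    assert (core : forall u v, d p u <= d u v / (2 * s + 2) -> d q v <= d u v / (2 * s + 2) ->
              In u P -> In v P -> adj X G u v -> exists L, walk_len d G p q L /\ L <= tt * d p q).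
    { intros u v H1 H2 Hu Hv Hadj.
      assert (Hk : 0 < 2 * s + 2) by lra.
      set (E := d u v) in *. set (D := d p q) in *.
      assert (HEpos : 0 < E). { unfold E. destruct (excluded_middle_informative (u = v)) as [<-|Hne].
        - exfalso. destruct Hadj as [Hx|Hx]; destruct (HordP _ (HG _ Hx)) as [_ [_ Hx']]; simpl in Hx'; auto.
        - apply d_pos; auto. }
      assert (H1' : d p u * (2 * s + 2) <= E). { apply Rmult_le_reg_r with (/ (2*s+2)). apply Rinv_0_lt_compat; lra.
        rewrite Rmult_assoc, Rinv_r; lra. }
      assert (H2' : d q v * (2 * s + 2) <= E). { apply Rmult_le_reg_r with (/ (2*s+2)). apply Rinv_0_lt_compat; lra.
        rewrite Rmult_assoc, Rinv_r; lra. }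
      assert (Htri : E <= d p u + D + d q v).
      { unfold E, D. pose proof (d_tri u p v). pose proof (d_tri p q v). rewrite (d_sym u p) in *. lra. }
      assert (HsE : s * E <= (s + 1) * D) by nra.
      assert (Hpu : d p u < D). { nra. }
      assert (Hqv : d v q < D). { rewrite d_sym. nra. }
      destruct (IH' p u Hp Hu Hpu) as [L1 [W1 B1]].
      destruct (IH' v q Hv Hq Hqv) as [L2 [W2 B2]].
      exists (L1 + (d u v + L2)). split.
      + apply walk_app with u; auto. apply walk_step; auto.
      + fold E. rewrite (d_sym v q) in B2. unfold tt in *.
        assert (Hs1 : 0 < s - 1) by lra.
        assert (B1' : (s - 1) * L1 <= (s + 1) * d p u).
        { apply Rmult_le_reg_r with (/ (s - 1)). apply Rinv_0_lt_compat; lra.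
          replace ((s - 1) * L1 * / (s - 1)) with L1 by (field; lra).
          replace ((s + 1) * d p u * / (s - 1)) with ((s + 1) / (s - 1) * d p u) by (field; lra). auto. }
        assert (B2' : (s - 1) * L2 <= (s + 1) * d q v).
        { apply Rmult_le_reg_r with (/ (s - 1)). apply Rinv_0_lt_compat; lra.
          replace ((s - 1) * L2 * / (s - 1)) with L2 by (field; lra).
          replace ((s + 1) * d q v * / (s - 1)) with ((s + 1) / (s - 1) * d q v) by (field; lra). auto. }
        assert (Hfin : (s - 1) * (L1 + (E + L2)) <= (s + 1) * D) by nra.
        replace ((s + 1) / (s - 1) * D) with ((s + 1) * D / (s - 1)) by (field; lra).
        apply Rmult_le_reg_r with (s - 1); [lra|]. unfold Rdiv. rewrite Rmult_assoc, Rinv_l by lra. lra. }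
    destruct Hcl as [[H1 H2]|[H1 H2]].
    + apply (core a b); auto. left; auto.
    + apply (core b a); auto. right; auto.
Qed.

End Stretch.
End Run.


Lemma sumR_ge_term {A} (f : A -> R) l c : In c l -> (forall a, In a l -> 0 <= f a) -> f c <= sumR f l.
Proof.
  induction l; intros Hc Hn; [destruct Hc|]. rewrite sumR_cons. destruct Hc as [->|Hc].
  - assert (0 <= sumR f l) by (apply sumR_nonneg; intros; apply Hn; right; auto). lra.
  - assert (f c <= sumR f l) by (apply IHl; auto; intros; apply Hn; right; auto).
    assert (0 <= f a) by (apply Hn; left; auto). lra.
Qed.

Lemma cover_count {A B} (p : B -> A -> bool) (S : list A) (cs : list B) :
  (forall y, In y S -> exists c, In c cs /\ p c y = true) ->
  INR (length S) <= sumR (fun c => INR (length (filter (p c) S))) cs.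
Proof.
  induction S; intros H.
  - simpl. apply sumR_nonneg. intros; simpl; lra.
  - assert (IH : INR (length S) <= sumR (fun c => INR (length (filter (p c) S))) cs) by (apply IHS; intros; apply H; right; auto).
    assert (E : sumR (fun c => INR (length (filter (p c) (a :: S)))) cs =
                sumR (fun c => (if p c a then 1 else 0) + INR (length (filter (p c) S))) cs).
    { apply sumR_ext. intros c _. simpl. destruct (p c a); simpl length; try rewrite S_INR; lra. }
    rewrite E, sumR_plus. destruct (H a (or_introl eq_refl)) as [c [Hc Hpc]].
    assert (1 <= sumR (fun c => if p c a then 1 else 0) cs).
    { replace 1 with (if p c a then 1 else 0) at 1 by (rewrite Hpc; auto).
      apply (sumR_ge_term (fun c => if p c a then 1 else 0)); auto. intros; destruct (p a0 a); lra. }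
    simpl length. rewrite S_INR. lra.
Qed.

Lemma length_le1_eq {A} (l : list A) x y : (length l <= 1)%nat -> In x l -> In y l -> x = y.
Proof. destruct l as [|a [|b l]]; simpl; intros; try lia; try tauto. destruct H0 as [<-|[]]; destruct H1 as [<-|[]]; auto. Qed.

Section Pack.
Variable X : Type.
Variable d : X -> X -> R.
Hypothesis Hm : is_metric X d.
Variable g : R.
Hypothesis Hdb : is_doubling X d g.

Definition KK := Rpower 2 g.
Lemma KK_pos : 0 < KK. Proof. unfold KK, Rpower. apply exp_pos. Qed.

Lemma packing : forall (M : nat) (x : X) (Rad r : R) (S : list X),
  0 < Rad -> 0 < r -> NoDup S -> (forall y, In y S -> d x y <= Rad) ->
  (forall y z, In y S -> In z S -> y <> z -> r < d y z) -> 2 * Rad <= 2 ^ M * r ->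
  INR (length S) <= KK ^ M.
Proof.
  induction M; intros x Rad r S HR Hr HN Hin Hsep HM.
  - simpl in *. destruct S as [|a [|b S]]; simpl; try lra.
    exfalso. inversion HN; subst. assert (a <> b) by (intro; subst; apply H1; left; auto).
    pose proof (Hsep a b (or_introl eq_refl) (or_intror (or_introl eq_refl)) H).
    pose proof (Hin a (or_introl eq_refl)). pose proof (Hin b (or_intror (or_introl eq_refl))).
    pose proof (d_tri X d Hm a x b). rewrite (d_sym X d Hm a x) in H5. lra.
  - destruct (Hdb x Rad HR) as [cs [Hcs Hcov]].
    pose proof (cover_count (fun c y => dec (d c y <= Rad / 2)) S cs) as HC.
    assert (HC' : INR (length S) <= sumR (fun c => INR (length (filter (fun y => dec (d c y <= Rad / 2)) S))) cs).
    { apply HC. intros y Hy. destruct (Hcov y (Hin y Hy)) as [c [Hc Hd]]. exists c. split; auto. apply (proj2 (decP _)); auto. }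
    assert (Hb : sumR (fun c => INR (length (filter (fun y => dec (d c y <= Rad / 2)) S))) cs <= sumR (fun _ => KK ^ M) cs).
    { apply sumR_le. intros c Hc. apply (IHM c (Rad / 2) r); auto; try lra.
      - apply NoDup_filter; auto.
      - intros y Hy. apply filter_In in Hy. destruct Hy as [_ Hy]. apply (proj1 (decP _)) in Hy. auto.
      - intros y z Hy Hz. apply filter_In in Hy. apply filter_In in Hz. apply Hsep; tauto.
      - simpl in HM. lra. }
    rewrite sumR_const in Hb. simpl.
    assert (0 <= KK ^ M) by (apply pow_le; left; apply KK_pos).
    assert (INR (length cs) * KK ^ M <= KK * KK ^ M) by (apply Rmult_le_compat_r; auto).
    lra.
Qed.

Lemma gamma_ge1 (p q : X) : p <> q -> 1 <= g.
Proof.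
  intro Hpq. destruct (Rle_or_lt 1 g) as [H|H]; auto. exfalso.
  assert (HK : KK < 2). { unfold KK. replace 2 with (Rpower 2 1) at 2 by (apply Rpower_1; lra). apply Rpower_lt; lra. }
  assert (Hsmall : forall (cs : list X), INR (length cs) <= KK -> (length cs <= 1)%nat).
  { intros cs Hc. destruct (Compare_dec.le_lt_dec (length cs) 1) as [l|l]; auto. apply le_INR in l. simpl in l. lra. }
  set (D := d p q). assert (HD : 0 < D) by (apply d_pos; auto).
  destruct (Hdb p D HD) as [cs [Hcs Hcov]].
  destruct (Hcov p) as [c [Hc Hcp]]. { rewrite d_refl; auto; lra. }
  destruct (Hcov q) as [c' [Hc' Hcq]]. { unfold D; lra. }
  assert (c = c') by (apply (length_le1_eq cs); auto). subst c'.
  destruct (Hdb c (D / 2)) as [cs2 [Hcs2 Hcov2]]; [lra|].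
  destruct (Hcov2 p Hcp) as [e [He Hep]]. destruct (Hcov2 q Hcq) as [e' [He' Heq]].
  assert (e = e') by (apply (length_le1_eq cs2); auto). subst e'.
  pose proof (d_tri X d Hm p e q). rewrite (d_sym X d Hm p e) in H0. fold D in H0. lra.
Qed.
End Pack.


Section Nets.
Variable X : Type.
Variable d : X -> X -> R.
Hypothesis Hm : is_metric X d.

Definition far (rho : R) (p : X) (acc : list X) : bool := dec (forall x, In x acc -> rho <= d p x).

Fixpoint gnet (rho : R) (acc l : list X) : list X :=
  match l with
  | [] => acc
  | p :: l' => gnet rho (if far rho p acc then p :: acc else acc) l'
  end.

Definition rsep (rho : R) (S : list X) := forall x y, In x S -> In y S -> x <> y -> rho <= d x y.

Lemma gnet_incl rho : forall l acc y, In y (gnet rho acc l) -> In y acc \/ In y l.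
Proof.
  induction l; intros acc y H; simpl in *; auto.
  destruct (IHl _ _ H) as [H'|H']; auto. destruct (far rho a acc); auto. destruct H'; auto.
Qed.

Lemma gnet_acc rho : forall l acc y, In y acc -> In y (gnet rho acc l).
Proof. induction l; intros acc y H; simpl; auto. apply IHl. destruct (far rho a acc); simpl; auto. Qed.

Lemma gnet_sep rho : 0 < rho -> forall l acc, rsep rho acc -> NoDup acc -> rsep rho (gnet rho acc l) /\ NoDup (gnet rho acc l).
Proof.
  intro Hr. induction l; intros acc Hs Hn; simpl; auto. apply IHl.
  - destruct (far rho a acc) eqn:E; auto. apply (proj1 (decP _)) in E.
    intros x y [<-|Hx] [<-|Hy] Hne; auto; [congruence|].
    rewrite (d_sym X d Hm). apply E; auto.
  - destruct (far rho a acc) eqn:E; auto. apply (proj1 (decP _)) in E. constructor; auto.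
    intro Ha. specialize (E a Ha). rewrite (d_refl X d Hm) in E. lra.
Qed.

Lemma gnet_cov rho : 0 < rho -> forall l acc p, In p l -> exists u, In u (gnet rho acc l) /\ d p u < rho.
Proof.
  intro Hr. induction l; intros acc p Hp; [destruct Hp|]. destruct Hp as [->|Hp]; [|apply IHl; auto].
  simpl. destruct (far rho p acc) eqn:E.
  - exists p. split; [apply gnet_acc; left; auto|]. rewrite (d_refl X d Hm). lra.
  - apply (proj1 (decF _)) in E. apply Classical_Pred_Type.not_all_ex_not in E. destruct E as [x Hx].
    exists x. split.
    + apply gnet_acc. destruct (excluded_middle_informative (In x acc)); auto. exfalso; apply Hx; intro; contradiction.
    + destruct (Rlt_or_le (d p x) rho); auto. exfalso; apply Hx; intro; auto.
Qed.

Variable h0 : R.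
Hypothesis Hh0 : 0 < h0.
Variable P : list X.

Definition hh (j : nat) := h0 * 2 ^ j.
Lemma hh_pos j : 0 < hh j. Proof. unfold hh. apply Rmult_lt_0_compat; auto. apply pow_lt; lra. Qed.
Lemma hh_S j : hh (S j) = 2 * hh j. Proof. unfold hh. simpl. ring. Qed.

Fixpoint NN (j : nat) : list X :=
  match j with
  | O => gnet (hh 0) [] P
  | S j' => gnet (hh (S j')) [] (NN j')
  end.

Lemma NN_sepnd j : rsep (hh j) (NN j) /\ NoDup (NN j).
Proof. destruct j; simpl; apply gnet_sep; try apply hh_pos; try apply NoDup_nil; intros x y []. Qed.

Lemma NN_subS j : incl (NN (S j)) (NN j).
Proof. intros y Hy. simpl in Hy. destruct (gnet_incl _ _ _ _ Hy) as [[]|H]; auto. Qed.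

Lemma NN_P j : incl (NN j) P.
Proof. induction j; [intros y Hy; simpl in Hy; destruct (gnet_incl _ _ _ _ Hy) as [[]|H]; auto|].
  intros y Hy. apply IHj, NN_subS; auto. Qed.

Lemma NN_nest i j : (i <= j)%nat -> incl (NN j) (NN i).
Proof. induction 1; [apply incl_refl|]. intros y Hy. apply IHle, NN_subS; auto. Qed.

Lemma NN_cov j p : In p P -> exists u, In u (NN j) /\ d p u < 2 * hh j.
Proof.
  intro Hp. induction j.
  - destruct (gnet_cov (hh 0) (hh_pos 0) P [] p Hp) as [u [Hu Hd]]. exists u. split; auto. pose proof (hh_pos 0); lra.
  - destruct IHj as [u [Hu Hd]]. destruct (gnet_cov (hh (S j)) (hh_pos (S j)) (NN j) [] u Hu) as [v [Hv Hd']].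
    exists v. split; auto. pose proof (d_tri X d Hm p u v). rewrite hh_S in *. lra.
Qed.
End Nets.


Section MST.
Variable X : Type.
Variable d : X -> X -> R.
Hypothesis Hm : is_metric X d.

Inductive pathv (T : list (X * X)) : X -> X -> list X -> Prop :=
| pv_refl p : pathv T p p [p]
| pv_step p u q l : adj X T p u -> pathv T u q l -> pathv T p q (p :: l).

Lemma pathv_head T p q l : pathv T p q l -> exists l', l = p :: l'.
Proof. destruct 1; eauto. Qed.

Lemma pathv_suffix T : forall A u q p C, pathv T u q (A ++ p :: C) -> pathv T p q (p :: C).
Proof.
  induction A; intros u q p C H; simpl in H.
  - inversion H; subst; auto.
  - inversion H; subst. { destruct A; discriminate. }
    eapply IHA; eauto.
Qed.

Lemma walk_path T p q L : walk_len d T p q L -> exists l, pathv T p q l /\ NoDup l.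
Proof.
  induction 1.
  - exists [p]. split; [constructor|]. constructor; [intros []|constructor].
  - destruct IHwalk_len as [l [Hl Hn]].
    destruct (excluded_middle_informative (In p l)) as [Hin|Hin].
    + apply in_split in Hin. destruct Hin as [A [C E]]. subst l. exists (p :: C). split.
      * eapply pathv_suffix; eauto.
      * apply NoDup_app_remove_l in Hn. auto.
    + exists (p :: l). split; [econstructor; eauto|]. constructor; auto.
Qed.

Fixpoint csum (w : X -> X -> R) (l : list X) : R :=
  match l with
  | x :: ((y :: _) as r) => w x y + csum w r
  | _ => 0
  end.

Lemma pathv_mono T T' p q l : pathv T p q l -> (forall x y, In x l -> In y l -> adj X T x y -> adj X T' x y) -> pathv T' p q l.
Proof.
  induction 1; intros H'; [constructor|]. destruct (pathv_head _ _ _ _ H0) as [l' ->].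
  econstructor.
  - apply H'; simpl; auto.
  - apply IHpathv. intros; apply H'; simpl; auto.
Qed.

Lemma csum_le_sum (w : X -> X -> R) (Hw : forall x y, 0 <= w x y) (Hs : forall x y, w x y = w y x) :
  forall l T p q, pathv T p q l -> NoDup l -> csum w l <= sumR (fun e => w (fst e) (snd e)) T.
Proof.
  induction l as [|a l IHl]; intros T p q H Hn; [inversion H|].
  inversion H as [p0 E1 E2 E3|p0 u q0 l0 H3 H5 E1 E2 E3]; subst.
  - simpl. apply sumR_nonneg. intros; auto.
  - destruct (pathv_head _ _ _ _ H5) as [l' ->]. change (csum w (a :: u :: l')) with (w a u + csum w (u :: l')).
    inversion Hn as [|? ? Hnotin Hn']; subst.
    assert (Hex : exists e, In e T /\ w a u = w (fst e) (snd e) /\ (fst e = a \/ snd e = a)).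
    { destruct H3 as [H3|H3]; [exists (a, u)|exists (u, a)]; simpl; auto. }
    destruct Hex as [e [HeT [Hwe Hep]]]. apply in_split in HeT. destruct HeT as [T1 [T2 ET]].
    assert (Hp' : pathv (T1 ++ T2) u q (u :: l')).
    { apply pathv_mono with T; auto. intros x y Hx Hy [Ha|Ha]; [left|right];
      (rewrite ET in Ha; apply in_app_or in Ha; apply in_or_app; destruct Ha as [Ha|[Ha|Ha]]; auto;
       exfalso; subst e; destruct Hep as [Hep|Hep]; simpl in Hep; subst; contradiction). }
    pose proof (IHl (T1 ++ T2) u q Hp' Hn').
    rewrite ET, sumR_app, sumR_cons. rewrite sumR_app in H0. lra.
Qed.

Lemma csum_tele (w : X -> X -> R) (f : X -> R) (Hw : forall x y, f x - f y <= w x y) :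
  forall T p q l, pathv T p q l -> f p - f q <= csum w l.
Proof.
  induction 1; simpl; [lra|]. destruct (pathv_head _ _ _ _ H0) as [l' ->].
  specialize (Hw p u). lra.
Qed.

Lemma sum_support (g : X -> R) : forall S Z, NoDup S -> (forall x, In x S -> ~ In x Z -> g x = 0) ->
  (forall x, In x Z -> 0 <= g x) -> sumR g S <= sumR g Z.
Proof.
  induction S; intros Z Hn Hz Hp.
  - rewrite sumR_nil. apply sumR_nonneg; auto.
  - inversion Hn; subst. rewrite sumR_cons. destruct (excluded_middle_informative (In a Z)) as [Ha|Ha].
    + apply in_split in Ha. destruct Ha as [Z1 [Z2 ->]]. rewrite sumR_app, sumR_cons.
      assert (sumR g S <= sumR g (Z1 ++ Z2)).
      { apply IHS; auto.
        - intros x Hx Hx'. apply Hz; [right; auto|]. intro H'. apply in_app_or in H'. destruct H' as [H'|[H'|H']].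
          + apply Hx'; apply in_or_app; auto.
          + subst; contradiction.
          + apply Hx'; apply in_or_app; auto.
        - intros x Hx. apply Hp. apply in_app_or in Hx. apply in_or_app. destruct Hx; simpl; auto. }
      rewrite sumR_app in H. lra.
    + rewrite (Hz a (or_introl eq_refl) Ha). assert (sumR g S <= sumR g Z) by (apply IHS; auto; intros; apply Hz; simpl; auto). lra.
Qed.

Variable t : R.
Hypothesis Ht : 0 < t.
Definition fx (x p : X) := Rmax 0 (t / 2 - d x p).
Definition Dx (x u v : X) := Rabs (fx x u - fx x v).

Lemma fx_zero x p : t / 2 <= d x p -> fx x p = 0.
Proof. intro; unfold fx, Rmax; destruct Rle_dec; lra. Qed.
Lemma fx_pos x p : d x p < t / 2 -> fx x p = t / 2 - d x p.
Proof. intro; unfold fx, Rmax; destruct Rle_dec; lra. Qed.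
Lemma fx_lip x u v : Dx x u v <= d u v.
Proof.
  unfold Dx, fx. pose proof (d_tri X d Hm x u v). pose proof (d_tri X d Hm x v u).
  rewrite (d_sym X d Hm v u) in H0.
  unfold Rmax; repeat destruct Rle_dec; split_Rabs; lra.
Qed.

Variable S : list X.
Hypothesis HSn : NoDup S.
Hypothesis HSs : forall x y, In x S -> In y S -> x <> y -> t <= d x y.

Lemma key_sum u v : sumR (fun x => Dx x u v) S <= d u v.
Proof.
  assert (Huniq : forall w x y, In x S -> In y S -> d x w < t / 2 -> d y w < t / 2 -> x = y).
  { intros w x y Hx Hy H1 H2. destruct (excluded_middle_informative (x = y)); auto. exfalso.
    pose proof (HSs x y Hx Hy n). pose proof (d_tri X d Hm x w y). rewrite (d_sym X d Hm w y) in H0. lra. }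
  assert (Hz : forall Z, (forall x, In x S -> d x u < t / 2 -> In x Z) -> (forall x, In x S -> d x v < t / 2 -> In x Z) ->
            sumR (fun x => Dx x u v) S <= sumR (fun x => Dx x u v) Z).
  { intros Z H1 H2. apply sum_support; auto.
    - intros x Hx HxZ. unfold Dx. rewrite !fx_zero; [rewrite Rminus_0_r, Rabs_R0; auto| |].
      + destruct (Rlt_or_le (d x v) (t / 2)); auto. exfalso; apply HxZ; auto.
      + destruct (Rlt_or_le (d x u) (t / 2)); auto. exfalso; apply HxZ; auto.
    - intros; apply Rabs_pos. }
  pose proof (d_nonneg X d Hm u v) as Huv.
  destruct (excluded_middle_informative (exists x0, In x0 S /\ d x0 u < t / 2)) as [[x0 [Hx0 Hd0]]|N0];
  destruct (excluded_middle_informative (exists x1, In x1 S /\ d x1 v < t / 2)) as [[x1 [Hx1 Hd1]]|N1].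
  - destruct (excluded_middle_informative (x0 = x1)) as [<-|Hne].
    + eapply Rle_trans; [apply (Hz [x0])|].
      * intros x Hx Hd. left. apply (Huniq u x0 x); auto.
      * intros x Hx Hd. left. apply (Huniq v x0 x); auto.
      * rewrite sumR_cons, sumR_nil, Rplus_0_r. apply fx_lip.
    + eapply Rle_trans; [apply (Hz [x0; x1])|].
      * intros x Hx Hd. left. apply (Huniq u x0 x); auto.
      * intros x Hx Hd. right; left. apply (Huniq v x1 x); auto.
      * rewrite !sumR_cons, sumR_nil, Rplus_0_r. unfold Dx.
        pose proof (HSs x0 x1 Hx0 Hx1 Hne).
        pose proof (d_tri X d Hm x0 u x1). pose proof (d_tri X d Hm u v x1). rewrite (d_sym X d Hm v x1) in H1.
        pose proof (d_tri X d Hm x0 v x1). pose proof (d_tri X d Hm x1 u x0). rewrite (d_sym X d Hm x1 x0) in H3.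
        pose proof (d_sym X d Hm u x0). pose proof (d_sym X d Hm v x1).
        rewrite (fx_pos x0 u), (fx_zero x0 v), (fx_zero x1 u), (fx_pos x1 v) by lra.
        split_Rabs; lra.
  - eapply Rle_trans; [apply (Hz [x0])|].
    + intros x Hx Hd. left. apply (Huniq u x0 x); auto.
    + intros x Hx Hd. exfalso. apply N1; eauto.
    + rewrite sumR_cons, sumR_nil, Rplus_0_r. apply fx_lip.
  - eapply Rle_trans; [apply (Hz [x1])|].
    + intros x Hx Hd. exfalso. apply N0; eauto.
    + intros x Hx Hd. left. apply (Huniq v x1 x); auto.
    + rewrite sumR_cons, sumR_nil, Rplus_0_r. apply fx_lip.
  - eapply Rle_trans; [apply (Hz [])|].
    + intros x Hx Hd. exfalso. apply N0; eauto.
    + intros x Hx Hd. exfalso. apply N1; eauto.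
    + rewrite sumR_nil. auto.
Qed.

Variable T : list (X * X).
Hypothesis HTconn : forall p q, In p S -> In q S -> exists L, walk_len d T p q L.

Lemma mst_lower : (2 <= length S)%nat -> INR (length S) * (t / 2) <= sumR (fun e => d (fst e) (snd e)) T.
Proof.
  intro H2.
  assert (Hx : forall x, In x S -> t / 2 <= sumR (fun e => Dx x (fst e) (snd e)) T).
  { intros x Hx. assert (exists y, In y S /\ y <> x).
    { destruct (excluded_middle_informative (exists y, In y S /\ y <> x)) as [H|H]; auto. exfalso.
      assert (incl S [x]). { intros y Hy. left. destruct (excluded_middle_informative (x = y)); auto. exfalso; apply H; eauto. }
      pose proof (NoDup_incl_length HSn H0). simpl in H1. lia. }
    destruct H as [y [Hy Hyx]]. destruct (HTconn x y Hx Hy) as [L HL].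
    destruct (walk_path T x y L HL) as [l [Hl Hn]].
    pose proof (csum_tele (Dx x) (fx x)) as Ht'.
    assert (HH : fx x x - fx x y <= csum (Dx x) l).
    { apply (Ht' ltac:(intros; unfold Dx; split_Rabs; lra) T x y l); auto. }
    assert (Hxy : t <= d x y) by (apply HSs; auto).
    rewrite (fx_pos x x) in HH by (rewrite (d_refl X d Hm); lra).
    rewrite (fx_zero x y) in HH by lra. rewrite (d_refl X d Hm) in HH.
    pose proof (csum_le_sum (Dx x)) as Hc.
    assert (csum (Dx x) l <= sumR (fun e => Dx x (fst e) (snd e)) T).
    { apply Hc with x y; auto. intros; apply Rabs_pos. intros; unfold Dx; apply Rabs_minus_sym. }
    lra. }
  rewrite Rmult_comm, <- sumR_const.
  eapply Rle_trans; [apply sumR_le; exact Hx|].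
  rewrite sumR_exchange. apply sumR_le. intros e _. apply key_sum.
Qed.

Lemma path_dist_le l p q : pathv T p q l -> NoDup l -> d p q <= sumR (fun e => d (fst e) (snd e)) T.
Proof.
  intros Hl Hn. eapply Rle_trans; [|apply (csum_le_sum d (d_nonneg X d Hm) (d_sym X d Hm) l T p q Hl Hn)].
  clear Hn. induction Hl; [rewrite (d_refl X d Hm); simpl; lra|]. destruct (pathv_head _ _ _ _ Hl) as [l' ->].
  change (csum d (p :: u :: l')) with (d p u + csum d (u :: l')). pose proof (d_tri X d Hm p u q). lra.
Qed.
End MST.


Lemma sum_partition {A B} (f : A -> R) (g : A -> B) (l : list A) (P : list B) :
  NoDup P -> (forall a, In a l -> In (g a) P) ->
  sumR f l = sumR (fun z => sumR f (filter (fun a => dec (g a = z)) l)) P.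
Proof.
  intros HP. induction l as [|a l IHl]; intros H.
  - induction P; [reflexivity|]. inversion HP; subst. rewrite sumR_cons, <- IHP; [simpl filter; rewrite sumR_nil; lra | auto | intros ? []].
  - assert (Hin : In (g a) P) by (apply H; left; reflexivity).
    assert (E : sumR (fun z => sumR f (filter (fun a0 => dec (g a0 = z)) (a :: l))) P
       = sumR (fun z => (if dec (g a = z) then f a else 0) + sumR f (filter (fun a0 => dec (g a0 = z)) l)) P).
    { apply sumR_ext. intros z _. simpl. destruct (dec (g a = z)); rewrite ?sumR_cons; lra. }
    rewrite E, sumR_plus, <- IHl by (intros; apply H; right; auto). rewrite sumR_cons.
    assert (sumR (fun z => if dec (g a = z) then f a else 0) P = f a).
    { clear -HP Hin. induction P; [destruct Hin|]. inversion HP; subst. rewrite sumR_cons.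
      destruct Hin as [->|Hin].
      + rewrite (proj2 (decP _) eq_refl). rewrite (sumR_ext _ (fun _ => 0)).
        * rewrite sumR_const. lra.
        * intros z Hz. destruct (dec (g a = z)) eqn:E; auto. apply (proj1 (decP _)) in E. subst. contradiction.
      + rewrite IHP; auto. destruct (dec (g a = a0)) eqn:E; [apply (proj1 (decP _)) in E; subst; contradiction | lra]. }
    lra.
Qed.

Lemma exists_pow2 (x : R) : 1 <= x -> exists j : nat, 2 ^ j <= x < 2 ^ (S j).
Proof.
  intro Hx.
  assert (Hn : exists n : nat, x < 2 ^ n).
  { destruct (INR_unbounded x) as [n Hn]. exists n.
    assert (INR n < 2 ^ n). { clear. induction n; [simpl; lra|]. rewrite S_INR. simpl pow. assert (1 <= 2 ^ n) by (apply pow_R1_Rle; lra). lra. }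
    lra. }
  destruct Hn as [n Hn]. induction n; [simpl in Hn; lra|].
  destruct (Rlt_or_le x (2 ^ n)) as [H|H]; auto. exists n. split; auto.
Qed.

Lemma pow2_mono (i j : nat) : (i <= j)%nat -> 2 ^ i <= 2 ^ j.
Proof. intro H. apply Rle_pow; auto; lra. Qed.

Lemma pow2_lt_le (i j : nat) : 2 ^ i < 2 ^ j -> (i < j)%nat.
Proof. intro H. destruct (Compare_dec.le_lt_dec j i) as [H'|H']; auto. apply pow2_mono in H'. lra. Qed.

Lemma window_count (Q : nat -> Prop) (m a n : nat) :
  (forall i j, Q i -> Q j -> (i + m <= j)%nat -> False) ->
  sumR (fun j => indic (Q j)) (seq a n) <= INR (2 * m).
Proof.
  intro H. replace (sumR (fun j => indic (Q j)) (seq a n)) with (INR (length (filter (fun j => dec (Q j)) (seq a n)))).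
  2:{ rewrite length_filter_sum. apply sumR_ext. intros j _. unfold indic, dec. destruct excluded_middle_informative; auto. }
  apply le_INR. destruct (filter (fun j => dec (Q j)) (seq a n)) as [|i0 L] eqn:EL; [simpl; lia|].
  assert (Hi0 : Q i0). { assert (In i0 (filter (fun j => dec (Q j)) (seq a n))) by (rewrite EL; left; auto).
    apply filter_In in H0. apply (proj1 (decP _)). tauto. }
  rewrite <- EL. replace (2 * m)%nat with (length (seq (i0 - m) (2 * m))) by apply length_seq. apply NoDup_incl_length.
  - apply NoDup_filter, seq_NoDup.
  - intros j Hj. apply filter_In in Hj. destruct Hj as [_ Hj]. apply (proj1 (decP _)) in Hj.
    apply in_seq. assert (~ (i0 + m <= j)%nat) by (intro H1; exact (H i0 j Hi0 Hj H1)).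
    assert (~ (j + m <= i0)%nat) by (intro H1; exact (H j i0 Hj Hi0 H1)). lia.
Qed.

Lemma div_nonneg a b : 0 <= a -> 0 < b -> 0 <= a / b.
Proof. intros. unfold Rdiv. apply Rmult_le_pos; auto. left; apply Rinv_0_lt_compat; auto. Qed.

Lemma sum_seq_const (c : R) a n : sumR (fun _ => c) (seq a n) = INR n * c.
Proof. rewrite sumR_const, length_seq. ring. Qed.

Section Count.
Variable X : Type.
Variable d : X -> X -> R.
Hypothesis Hm : is_metric X d.
Variable g : R.
Hypothesis Hdb : is_doubling X d g.
Variable s : R.
Hypothesis Hs : 1 < s.
Variable P : list X.
Hypothesis HPn : NoDup P.
Variable G : list (X * X).
Hypothesis HSep : Sep X d s G.
Hypothesis HGP : forall e, In e G -> In (fst e) P /\ In (snd e) P /\ fst e <> snd e.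
Variable dmin dmax : R.
Hypothesis Hdmin0 : 0 < dmin.
Hypothesis Hdmin : forall e, In e G -> dmin <= len X d e.
Hypothesis Hdmax : forall e, In e G -> len X d e <= dmax.
Variable J : nat.
Hypothesis HJ : dmax / dmin < 2 ^ (S J).

Let k := kk s.
Lemma k_ge4 : 4 <= k. Proof. unfold k, kk. lra. Qed.

Definition ell (j : nat) := dmin * 2 ^ j.
Definition bnd (j : nat) (e : X * X) := ell j <= len X d e < ell (S j).
Definition bidx (e : X * X) : nat := epsilon (inhabits 0%nat) (fun j => bnd j e).

Lemma ell_pos j : 0 < ell j. Proof. unfold ell. apply Rmult_lt_0_compat; auto. apply pow_lt; lra. Qed.
Lemma ell_S j : ell (S j) = 2 * ell j. Proof. unfold ell. simpl. ring. Qed.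

Lemma bidx_spec e : In e G -> bnd (bidx e) e /\ (bidx e <= J)%nat.
Proof.
  intro He. assert (Hex : exists j, bnd j e).
  { destruct (exists_pow2 (len X d e / dmin)) as [j [H1 H2]].
    - apply Rmult_le_reg_r with dmin; auto. unfold Rdiv. rewrite Rmult_assoc, Rinv_l by lra. specialize (Hdmin e He). lra.
    - exists j. unfold bnd, ell. split.
      + apply Rmult_le_reg_r with (/ dmin). apply Rinv_0_lt_compat; auto.
        replace (dmin * 2 ^ j * / dmin) with (2 ^ j) by (field; lra). auto.
      + apply Rmult_lt_reg_r with (/ dmin). apply Rinv_0_lt_compat; auto.
        replace (dmin * 2 ^ S j * / dmin) with (2 ^ S j) by (field; lra). auto. }
  pose proof (@epsilon_spec nat (inhabits 0%nat) _ Hex) as Hb. fold (bidx e) in Hb. split; auto.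
  destruct Hb as [Hb1 Hb2]. unfold ell in Hb1.
  assert (2 ^ bidx e < 2 ^ S J).
  { apply Rle_lt_trans with (dmax / dmin); auto. apply Rmult_le_reg_r with dmin; auto.
    unfold Rdiv. rewrite Rmult_assoc, Rinv_l by lra. specialize (Hdmax e He). lra. }
  apply pow2_lt_le in H. lia.
Qed.

Lemma G_nodup : NoDup G. Proof. apply (Sep_NoDup X d Hm s Hs G HSep). Qed.

Lemma band_partition (f : X * X -> R) (l : list (X * X)) : incl l G ->
  sumR f l = sumR (fun j => sumR f (filter (fun e => dec (bidx e = j)) l)) (seq 0 (S J)).
Proof.
  intro Hl. apply sum_partition; [apply seq_NoDup|]. intros e He. apply in_seq.
  destruct (bidx_spec e (Hl e He)). lia.
Qed.

Lemma band_count (l : list (X * X)) : incl l G ->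
  INR (length l) = sumR (fun j => INR (length (filter (fun e => dec (bidx e = j)) l))) (seq 0 (S J)).
Proof.
  intro Hl. rewrite <- (Rmult_1_l (INR (length l))), <- sumR_const, (band_partition _ l Hl).
  apply sumR_ext. intros j _. rewrite sumR_const. lra.
Qed.

Lemma conflict e f r : In e G -> In f G -> e <> f -> r <= len X d e / k -> r <= len X d f / k -> ~ close X d r e f.
Proof. intros. apply (Sep_conflict X d Hm s G e f r); auto. Qed.

Definition oth (v : X) (e : X * X) := if dec (fst e = v) then snd e else fst e.

Lemma degree_band v j (M : nat) : 4 * k <= 2 ^ M ->
  INR (length (filter (fun e => dec (bidx e = j)) (filter (fun e => dec (fst e = v \/ snd e = v)) G))) <= KK g ^ M.
Proof.
  intro HM. set (L := filter (fun e => dec (bidx e = j)) (filter (fun e => dec (fst e = v \/ snd e = v)) G)).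
  assert (HL : forall e, In e L -> In e G /\ (fst e = v \/ snd e = v) /\ bnd j e).
  { intros e He. unfold L in He. apply filter_In in He. destruct He as [He Hb]. apply filter_In in He.
    destruct He as [He Hv]. apply (proj1 (decP _)) in Hb. apply (proj1 (decP _)) in Hv. subst j.
    split; auto. split; auto. apply bidx_spec; auto. }
  assert (Hoth : forall e, In e L -> d v (oth v e) = len X d e /\ ((fst e = v /\ snd e = oth v e) \/ (snd e = v /\ fst e = oth v e))).
  { intros e He. destruct (HL e He) as [_ [Hv _]]. unfold oth, len. destruct (dec (fst e = v)) eqn:E.
    - apply (proj1 (decP _)) in E. rewrite E. auto.
    - apply (proj1 (decF _)) in E. destruct Hv as [Hv|Hv]; [contradiction|]. rewrite Hv, (d_sym X d Hm). auto. }
  assert (Hcl : forall e f r, In e L -> In f L -> d (oth v e) (oth v f) <= r -> close X d r e f).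
  { intros e f r He Hf Hd. pose proof (d_nonneg X d Hm (oth v e) (oth v f)).
    destruct (Hoth e He) as [_ [[E1 E2]|[E1 E2]]]; destruct (Hoth f Hf) as [_ [[F1 F2]|[F1 F2]]];
    unfold close; rewrite ?E1, ?E2, ?F1, ?F2, ?(d_refl X d Hm); lra. }
  assert (Hlen : forall e, In e L -> ell j <= len X d e /\ len X d e < 2 * ell j).
  { intros e He. destruct (HL e He) as [_ [_ [H1 H2]]]. rewrite ell_S in H2. auto. }
  pose proof (ell_pos j) as Hep. pose proof k_ge4.
  assert (Hk0 : 0 < k) by lra.
  replace (length L) with (length (map (oth v) L)) by apply length_map.
  apply (packing X d Hm g Hdb M v (2 * ell j) (ell j / k)); try lra.
  - apply Rdiv_lt_0_compat; lra.
  - assert (HNL : NoDup L) by (apply NoDup_filter, NoDup_filter, G_nodup).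
    clear -HNL Hcl HL Hm Hlen Hep Hk0 HSep Hs. induction HNL; simpl; constructor.
    + intro Hin. apply in_map_iff in Hin. destruct Hin as [y [Ey Hy]].
      assert (x <> y) by (intro; subst; contradiction).
      apply (conflict x y 0); auto.
      * apply HL; left; auto.
      * apply HL; right; auto.
      * apply div_nonneg; [apply (d_nonneg X d Hm)|lra].
      * apply div_nonneg; [apply (d_nonneg X d Hm)|lra].
      * apply Hcl; [left|right|]; auto. rewrite Ey, (d_refl X d Hm). lra.
    + apply IHHNL; intros; first [apply HL | apply Hcl | apply Hlen]; simpl; auto.
  - intros y Hy. apply in_map_iff in Hy. destruct Hy as [e [<- He]]. destruct (Hoth e He) as [-> _].
    destruct (Hlen e He). lra.
  - intros y z Hy Hz Hyz. apply in_map_iff in Hy. apply in_map_iff in Hz.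
    destruct Hy as [e [<- He]]. destruct Hz as [f [<- Hf]].
    destruct (Rlt_or_le (ell j / k) (d (oth v e) (oth v f))) as [Hlt|Hle]; auto. exfalso.
    assert (e <> f) by (intro; subst; contradiction).
    apply (conflict e f (ell j / k)); auto.
    + apply HL; auto.
    + apply HL; auto.
    + destruct (Hlen e He). unfold Rdiv. apply Rmult_le_compat_r; [left; apply Rinv_0_lt_compat|]; lra.
    + destruct (Hlen f Hf). unfold Rdiv. apply Rmult_le_compat_r; [left; apply Rinv_0_lt_compat|]; lra.
  - assert (ell j / k * k = ell j) by (field; lra).
    assert (0 < ell j / k) by (apply Rdiv_lt_0_compat; lra). nra.
Qed.

Lemma degree_bound v (M : nat) : 4 * k <= 2 ^ M ->
  INR (length (filter (fun e => dec (fst e = v \/ snd e = v)) G)) <= INR (S J) * KK g ^ M.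
Proof.
  intro HM. rewrite (band_count _ (fun e He => proj1 (proj1 (filter_In _ _ _) He))).
  eapply Rle_trans; [apply (sumR_le _ (fun _ => KK g ^ M)); intros j _; apply degree_band; auto|].
  rewrite sum_seq_const. lra.
Qed.

Definition h0 := dmin / (4 * k).
Lemma h0_pos : 0 < h0. Proof. unfold h0. pose proof k_ge4. apply Rdiv_lt_0_compat; lra. Qed.
Definition Nt (j : nat) := NN X d h0 P j.
Definition hj (j : nat) := hh h0 j.
Lemma hj_pos j : 0 < hj j. Proof. apply hh_pos, h0_pos. Qed.
Lemma ell_hj j : ell j = 4 * k * hj j.
Proof. unfold ell, hj, hh, h0. pose proof k_ge4. field. lra. Qed.
Lemma hj_add j m : hj (j + m) = hj j * 2 ^ m.
Proof. unfold hj, hh. rewrite pow_add. ring. Qed.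

Definition rep (j : nat) (a : X) : X := epsilon (inhabits a) (fun u => In u (Nt j) /\ d a u < 2 * hj j).
Lemma rep_spec j a : In a P -> In (rep j a) (Nt j) /\ d a (rep j a) < 2 * hj j.
Proof.
  intro Ha. unfold rep. apply epsilon_spec. destruct (NN_cov X d Hm h0 h0_pos P j a Ha) as [u Hu]. exists u. auto.
Qed.

Definition band (j : nat) := filter (fun e => dec (bidx e = j)) G.
Lemma band_In j e : In e (band j) -> In e G /\ bidx e = j /\ bnd j e.
Proof.
  intro He. unfold band in He. apply filter_In in He. destruct He as [He Hb]. apply (proj1 (decP _)) in Hb.
  split; auto. split; auto. subst. apply bidx_spec; auto.
Qed.

Definition cc := 8 * k + 4.

Lemma pair_facts j e : In e (band j) ->
  rep j (fst e) <> rep j (snd e) /\ d (rep j (fst e)) (rep j (snd e)) <= cc * hj j /\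
  In (rep j (fst e)) (Nt j) /\ In (rep j (snd e)) (Nt j).
Proof.
  intro He. destruct (band_In j e He) as [HeG [_ [Hb1 Hb2]]]. destruct (HGP e HeG) as [H1 [H2 _]].
  destruct (rep_spec j _ H1) as [R1 D1]. destruct (rep_spec j _ H2) as [R2 D2].
  rewrite ell_S, ell_hj in *. unfold len in *. pose proof k_ge4. pose proof (hj_pos j).
  set (u := rep j (fst e)) in *. set (v := rep j (snd e)) in *.
  pose proof (d_tri X d Hm (fst e) u (snd e)). pose proof (d_tri X d Hm u (snd e) v).
  pose proof (d_tri X d Hm u (fst e) (snd e)). rewrite (d_sym X d Hm u (fst e)) in *.
  split; [|split; [|split; auto]].
  - intro Huv. rewrite <- Huv in D2. rewrite (d_sym X d Hm (snd e) u) in *. nra.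
  - unfold cc. nra.
Qed.

Lemma pair_inj j e f : In e (band j) -> In f (band j) ->
  rep j (fst e) = rep j (fst f) -> rep j (snd e) = rep j (snd f) -> e = f.
Proof.
  intros He Hf E1 E2. destruct (excluded_middle_informative (e = f)) as [|Hne]; auto. exfalso.
  destruct (band_In j e He) as [HeG [_ [He1 _]]]. destruct (band_In j f Hf) as [HfG [_ [Hf1 _]]].
  destruct (HGP e HeG) as [A1 [A2 _]]. destruct (HGP f HfG) as [B1 [B2 _]].
  destruct (rep_spec j _ A1) as [_ DA1]. destruct (rep_spec j _ A2) as [_ DA2].
  destruct (rep_spec j _ B1) as [_ DB1]. destruct (rep_spec j _ B2) as [_ DB2].
  rewrite E1 in DA1. rewrite E2 in DA2.
  pose proof k_ge4. pose proof (hj_pos j). rewrite ell_hj in He1, Hf1.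
  apply (conflict e f (4 * hj j)); auto.
  - assert (len X d e / k * k = len X d e) by (field; lra). nra.
  - assert (len X d f / k * k = len X d f) by (field; lra). nra.
  - left. split.
    + pose proof (d_tri X d Hm (fst e) (rep j (fst f)) (fst f)). rewrite (d_sym X d Hm (rep j (fst f)) (fst f)) in H1. lra.
    + pose proof (d_tri X d Hm (snd e) (rep j (snd f)) (snd f)). rewrite (d_sym X d Hm (rep j (snd f)) (snd f)) in H1. lra.
Qed.

Definition Wz (j : nat) (z : X) := filter (fun w => dec (d z w <= cc * hj j)) (Nt j).

Lemma Wz_bound j z (M1 : nat) : 4 * cc <= 2 ^ M1 -> In z P -> INR (length (Wz j z)) <= KK g ^ M1.
Proof.
  intros HM Hz. destruct (NN_sepnd X d Hm h0 h0_pos P j) as [Hsep Hnd]. pose proof (hj_pos j). pose proof k_ge4.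
  apply (packing X d Hm g Hdb M1 z (cc * hj j) (hj j / 2)); unfold cc in *.
  - nra.
  - lra.
  - apply NoDup_filter; auto.
  - intros y Hy. apply filter_In in Hy. apply (proj1 (decP _)). tauto.
  - intros y w Hy Hw Hyw. apply filter_In in Hy. apply filter_In in Hw.
    pose proof (Hsep y w (proj1 Hy) (proj1 Hw) Hyw). unfold hj in *. lra.
  - nra.
Qed.

Lemma band_net_count j (M1 : nat) : 4 * cc <= 2 ^ M1 -> INR (length (band j)) <= INR (length (Nt j)) * KK g ^ M1.
Proof.
  intro HM. destruct (NN_sepnd X d Hm h0 h0_pos P j) as [Hsep Hnd].
  rewrite (count_partition (fun e => rep j (fst e)) (band j) (Nt j) Hnd).
  2:{ intros e He. apply (pair_facts j e He). }
  rewrite Rmult_comm, <- sumR_const. apply sumR_le. intros z Hz.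
  eapply Rle_trans; [|apply (Wz_bound j z M1 HM (NN_P X d h0 P j z Hz))]. apply le_INR.
  apply (inj_count (fun e => rep j (snd e))).
  - apply NoDup_filter, NoDup_filter, G_nodup.
  - intros e He. apply filter_In in He. destruct He as [He Hr]. apply (proj1 (decP _)) in Hr.
    destruct (pair_facts j e He) as [_ [Hd [_ H2]]]. apply filter_In. split; auto. apply (proj2 (decP _)). rewrite <- Hr. auto.
  - intros e f He Hf E. apply filter_In in He. apply filter_In in Hf.
    destruct He as [He Hre]. destruct Hf as [Hf Hrf]. apply (proj1 (decP _)) in Hre. apply (proj1 (decP _)) in Hrf.
    apply (pair_inj j); auto. congruence.
Qed.

Definition charge (j m : nat) (e : X * X) := if dec (In (rep j (fst e)) (Nt (j + m))) then rep j (snd e) else rep j (fst e).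

Lemma band_death_count j (m M1 : nat) : cc < 2 ^ m -> 4 * cc <= 2 ^ M1 ->
  INR (length (band j)) <= sumR (fun z => 2 * KK g ^ M1 * indic (In z (Nt j) /\ ~ In z (Nt (j + m)))) P.
Proof.
  intros Hm' HM.
  assert (HchP : forall e, In e (band j) -> In (charge j m e) P /\ In (charge j m e) (Nt j) /\ ~ In (charge j m e) (Nt (j + m)) /\
     ((charge j m e = rep j (snd e) /\ In (rep j (fst e)) (Wz j (charge j m e))) \/ (charge j m e = rep j (fst e) /\ In (rep j (snd e)) (Wz j (charge j m e))))).
  { intros e He. destruct (pair_facts j e He) as [Hne [Hd [H1 H2]]]. unfold charge.
    destruct (dec (In (rep j (fst e)) (Nt (j + m)))) eqn:E.
    - apply (proj1 (decP _)) in E. split; [apply (NN_P X d h0 P j); auto|]. split; auto. split.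
      + intro Hv. destruct (NN_sepnd X d Hm h0 h0_pos P (j + m)) as [Hsep _].
        pose proof (Hsep _ _ E Hv Hne). fold (hj (j + m)) in H. rewrite hj_add in H. pose proof (hj_pos j). nra.
      + left. split; auto. apply filter_In. split; auto. apply (proj2 (decP _)). rewrite (d_sym X d Hm). auto.
    - apply (proj1 (decF _)) in E. split; [apply (NN_P X d h0 P j); auto|]. split; auto. split; auto.
      right. split; auto. apply filter_In. split; auto. apply (proj2 (decP _)). auto. }
  rewrite (count_partition (charge j m) (band j) P HPn) by (intros; apply HchP; auto).
  apply sumR_le. intros z Hz.
  set (L := filter (fun e => dec (charge j m e = z)) (band j)).
  destruct L as [|e0 L'] eqn:EL.
  { simpl. unfold indic. destruct excluded_middle_informative; [|lra].
    assert (0 <= KK g ^ M1) by (apply pow_le; left; apply KK_pos). lra. }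
  assert (He0 : In e0 L) by (rewrite EL; left; auto). unfold L in He0. apply filter_In in He0. destruct He0 as [He0 Hc0].
  apply (proj1 (decP _)) in Hc0. destruct (HchP e0 He0) as [_ [Hz1 [Hz2 _]]]. rewrite Hc0 in Hz1, Hz2.
  unfold indic. destruct excluded_middle_informative as [_|Hn]; [|tauto]. rewrite Rmult_1_r.
  rewrite <- EL.
  eapply Rle_trans with (INR (length (map (fun w => (z, w)) (Wz j z) ++ map (fun w => (w, z)) (Wz j z)))).
  - apply le_INR. apply (inj_count (fun e => (rep j (fst e), rep j (snd e)))).
    + apply NoDup_filter, NoDup_filter, G_nodup.
    + intros e He. unfold L in He. apply filter_In in He. destruct He as [He Hc]. apply (proj1 (decP _)) in Hc.
      destruct (HchP e He) as [_ [_ [_ [[E1 E2]|[E1 E2]]]]]; rewrite Hc in E1, E2; apply in_or_app.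
      * right. apply in_map_iff. exists (rep j (fst e)). split; [rewrite E1; auto|auto].
      * left. apply in_map_iff. exists (rep j (snd e)). split; [rewrite E1; auto|auto].
    + intros e f He Hf E. unfold L in He, Hf. apply filter_In in He. apply filter_In in Hf.
      injection E; intros. apply (pair_inj j); tauto.
  - rewrite length_app, !length_map, plus_INR. pose proof (Wz_bound j z M1 HM Hz). lra.
Qed.

Lemma edge_bound (m M1 : nat) : cc < 2 ^ m -> 4 * cc <= 2 ^ M1 ->
  INR (length G) <= INR (length P) * (2 * KK g ^ M1 * INR (2 * m)).
Proof.
  intros Hm' HM. rewrite (band_count G (incl_refl G)).
  eapply Rle_trans; [apply sumR_le; intros j _; apply (band_death_count j m M1 Hm' HM)|].
  rewrite sumR_exchange.
  eapply Rle_trans; [apply (sumR_le _ (fun _ => 2 * KK g ^ M1 * INR (2 * m))); intros z _|rewrite sumR_const; lra].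
  rewrite sumR_scale. apply Rmult_le_compat_l; [assert (0 <= KK g ^ M1) by (apply pow_le; left; apply KK_pos); lra|].
  apply (window_count (fun j => In z (Nt j) /\ ~ In z (Nt (j + m)))).
  intros i j [Hi1 Hi2] [Hj1 Hj2] Hij. apply Hi2. apply (NN_nest X d h0 P (i + m) j Hij); auto.
Qed.

Variable T : list (X * X).
Variable W : R.
Hypothesis HW : W = sumR (fun e => d (fst e) (snd e)) T.
Hypothesis HTc : forall p q, In p P -> In q P -> exists L, walk_len d T p q L.
Hypothesis HW0 : 0 <= W.

Lemma band_weight j (M1 : nat) : 4 * cc <= 2 ^ M1 ->
  sumR (len X d) (band j) <= 16 * k * KK g ^ M1 * W.
Proof.
  intro HM. pose proof (KK_pos g) as HK. assert (HKM : 0 <= KK g ^ M1) by (apply pow_le; lra). pose proof k_ge4.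
  destruct (Compare_dec.le_lt_dec 2 (length (Nt j))) as [H2|H2].
  - destruct (NN_sepnd X d Hm h0 h0_pos P j) as [Hsep Hnd].
    assert (HL : INR (length (Nt j)) * (hj j / 2) <= W).
    { rewrite HW. apply (mst_lower X d Hm (hj j) (hj_pos j) (Nt j) Hnd); auto.
      intros p q Hp Hq. apply HTc; apply (NN_P X d h0 P j); auto. }
    assert (Hb : sumR (len X d) (band j) <= INR (length (band j)) * (2 * ell j)).
    { rewrite Rmult_comm, <- sumR_const. apply sumR_le. intros e He. destruct (band_In j e He) as [_ [_ [_ Hl]]].
      rewrite ell_S in Hl. lra. }
    pose proof (band_net_count j M1 HM). rewrite ell_hj in Hb. pose proof (hj_pos j).
    assert (Hb2 : INR (length (band j)) * (2 * (4 * k * hj j)) <= INR (length (Nt j)) * KK g ^ M1 * (2 * (4 * k * hj j))).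
    { apply Rmult_le_compat_r; [nra|auto]. }
    assert (HN : INR (length (Nt j)) * hj j <= 2 * W) by lra.
    assert (E : INR (length (Nt j)) * KK g ^ M1 * (2 * (4 * k * hj j)) = (8 * k * KK g ^ M1) * (INR (length (Nt j)) * hj j)) by ring.
    assert ((8 * k * KK g ^ M1) * (INR (length (Nt j)) * hj j) <= (8 * k * KK g ^ M1) * (2 * W)).
    { apply Rmult_le_compat_l; auto. apply Rmult_le_pos; lra. }
    lra.
  - destruct (band j) as [|e L] eqn:EB.
    + rewrite sumR_nil. apply Rmult_le_pos; [|auto]. nra.
    + exfalso. assert (He : In e (band j)) by (rewrite EB; left; auto).
      destruct (pair_facts j e He) as [Hne [_ [H1 H2']]]. apply Hne. apply (length_le1_eq (Nt j)); auto. lia.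
Qed.

Lemma weight_bound (M1 : nat) : 4 * cc <= 2 ^ M1 ->
  sumR (len X d) G <= INR (S J) * (16 * k * KK g ^ M1 * W).
Proof.
  intro HM. rewrite (band_partition (len X d) G (incl_refl G)).
  eapply Rle_trans; [apply (sumR_le _ (fun _ => 16 * k * KK g ^ M1 * W)); intros j _; apply band_weight; auto|].
  rewrite sum_seq_const. lra.
Qed.

End Count.


Lemma KK_pow g (M : nat) : KK g ^ M = Rpower (2 ^ M) g.
Proof.
  unfold KK. rewrite <- Rpower_pow by (unfold Rpower; apply exp_pos).
  rewrite <- (Rpower_pow M 2) by lra. rewrite !Rpower_mult. f_equal. ring.
Qed.

Lemma pow_bound_exp (s g B : R) (a : nat) : 1 < s -> 0 <= g -> 0 < B -> B <= (2 * s) ^ a ->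
  Rpower B g <= Rpower (2 * s) (INR a * g).
Proof.
  intros Hs Hg HB HBa. rewrite <- Rpower_mult, Rpower_pow by lra.
  apply Rle_Rpower_l; auto.
Qed.

Lemma s_pow_ge (s : R) (n : nat) : 1 <= s -> (1 <= n)%nat -> s <= s ^ n.
Proof. intros. replace s with (s ^ 1) at 1 by ring. apply Rle_pow; auto. Qed.

Lemma Rpow_mono (s a b : R) : 1 < s -> a <= b -> Rpower (2 * s) a <= Rpower (2 * s) b.
Proof. intros. apply Rle_Rpower; lra. Qed.

Lemma INR_le_pow2 (n : nat) : INR n <= 2 ^ n.
Proof. induction n; [simpl; lra|]. rewrite S_INR. simpl pow. assert (1 <= 2 ^ n) by (apply pow_R1_Rle; lra). lra. Qed.

Lemma Rpower_pos' x y : 0 < Rpower x y. Proof. unfold Rpower. apply exp_pos. Qed.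

Theorem theorem13 :
  exists C c : R, 0 < C /\ 0 < c /\
  forall (X : Type) (dist : X -> X -> R), is_metric X dist ->
  forall gamma : R, doubling_dimension X dist gamma ->
  forall (P : list X), NoDup P ->
  forall alpha : R, aspect_ratio X dist P alpha ->
  forall mst : R, mst_weight X dist P mst ->
  forall s : R, 1 < s ->
  forall (ord : list (X * X)), valid_order X P ord ->
  forall G : list (X * X), run X dist s [] ord G ->
  let n := INR (length P) in
  let sfac := Rpower (2 * s) (c * gamma) in
  (* stretch factor (s+1)/(s-1) *)
  (forall p q, In p P -> In q P ->
     exists L, walk_len dist G p q L /\ L <= (s + 1) / (s - 1) * dist p q) /\
  (* total edge weight *)
  weight X dist G <= C * gamma ^ 9 * (1 + lg alpha) * mst * sfac /\
  (* number of edges *)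
  INR (length G) <= C * gamma ^ 4 * n * sfac /\
  (* maximum degree *)
  (forall v, In v P -> INR (degree X G v) <= C * gamma ^ 4 * (1 + lg alpha) * sfac) /\
  (* average degree *)
  2 * INR (length G) / n <= C * gamma ^ 4 * sfac.
Proof.
  exists 16, 20. split; [lra|]. split; [lra|].
  intros X d Hm gamma [Hdb _] P HPn alpha Har mst Hmst s Hs ord [HordN Hordiff] G Hrun n sfac.
  destruct Har as [dmax [dmin [[p0 [q0 [Hp0 [Hq0 [Hpq0 Hdmax_eq]]]]] [Hdmaxb [[p1 [q1 [Hp1 [Hq1 [Hpq1 Hdmin_eq]]]]] [Hdminb Halpha]]]]]].
  destruct Hmst as [[T [[HTP [HTlen HTconn]] HWT]] _].
  pose proof (gamma_ge1 X d Hm gamma Hdb p0 q0 Hpq0) as Hg1.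
  assert (Hdmin0 : 0 < dmin) by (rewrite <- Hdmin_eq; apply (d_pos X d Hm); auto).
  destruct (run_inv X d s [] ord G Hrun) as [_ [HSepf [Hcov HGo]]].
  assert (HSep : Sep X d s G). { apply HSepf. intros A f B E. destruct A; discriminate. }
  assert (HG' : forall e, In e G -> In e ord). { intros e He. destruct (HGo e He) as [[]|H]; auto. }
  assert (HordP : forall e, In e ord -> In (fst e) P /\ In (snd e) P /\ fst e <> snd e).
  { intros [a b] He. apply Hordiff in He. auto. }
  assert (HGP : forall e, In e G -> In (fst e) P /\ In (snd e) P /\ fst e <> snd e) by auto.
  assert (Hord' : forall p q, In p P -> In q P -> p <> q -> In (p, q) ord) by (intros; apply Hordiff; auto).
  assert (Hdmin : forall e, In e G -> dmin <= len X d e).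
  { intros e He. destruct (HGP e He) as [H1 [H2 H3]]. apply Hdminb; auto. }
  assert (Hdmax : forall e, In e G -> len X d e <= dmax).
  { intros e He. destruct (HGP e He) as [H1 [H2 H3]]. apply Hdmaxb; auto. }
  assert (Hdd : dmin <= dmax) by (rewrite <- Hdmax_eq; apply Hdminb; auto).
  assert (Ha1 : 1 <= alpha).
  { rewrite Halpha. apply Rmult_le_reg_r with dmin; auto. unfold Rdiv. rewrite Rmult_assoc, Rinv_l by lra. lra. }
  destruct (exists_pow2 alpha Ha1) as [J [HJ1 HJ2]].
  assert (HJ : dmax / dmin < 2 ^ S J) by (rewrite <- Halpha; auto).
  assert (Hk4 : 4 <= kk s) by (unfold kk; lra).
  destruct (exists_pow2 (4 * kk s)) as [j2 [H21 H22]]; [lra|].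
  destruct (exists_pow2 (4 * cc s)) as [j1 [H11 H12]]; [unfold cc; lra|].
  destruct (exists_pow2 (cc s)) as [jm [Hm1 Hm2]]; [unfold cc; lra|].
  set (M2 := S j2). set (M1 := S j1). set (m := S jm).
  assert (HM2 : 4 * kk s <= 2 ^ M2) by (unfold M2; lra).
  assert (HM2' : 2 ^ M2 <= 8 * kk s) by (unfold M2; simpl; lra).
  assert (HM1 : 4 * cc s <= 2 ^ M1) by (unfold M1; lra).
  assert (HM1' : 2 ^ M1 <= 8 * cc s) by (unfold M1; simpl; lra).
  assert (Hmm : cc s < 2 ^ m) by (unfold m; lra).
  assert (Hmm' : 2 ^ m <= 2 * cc s) by (unfold m; simpl; lra).
  assert (HW : mst = sumR (fun e => d (fst e) (snd e)) T) by (rewrite <- HWT; reflexivity).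
  assert (HW0 : 0 <= mst) by (rewrite HW; apply sumR_nonneg; intros; apply (d_nonneg X d Hm)).
  assert (HTc : forall p q, In p P -> In q P -> exists L, walk_len d T p q L) by auto.
  assert (Hg0 : 0 <= gamma) by lra.
  assert (Hs1 : s <= s ^ 5 /\ s <= s ^ 9 /\ s <= s ^ 8 /\ s <= s ^ 2) by (repeat split; apply s_pow_ge; lra || lia).
  assert (B1 : KK gamma ^ M1 <= Rpower (2 * s) (9 * gamma)).
  { rewrite KK_pow. replace 9 with (INR 9) by (simpl; ring). apply pow_bound_exp; auto. apply pow_lt; lra.
    rewrite Rpow_mult_distr. unfold cc, kk in *. simpl (2 ^ 9). nra. }
  assert (B2 : KK gamma ^ M2 <= Rpower (2 * s) (5 * gamma)).
  { rewrite KK_pow. replace 5 with (INR 5) by (simpl; ring). apply pow_bound_exp; auto. apply pow_lt; lra.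
    rewrite Rpow_mult_distr. unfold cc, kk in *. simpl (2 ^ 5). nra. }
  assert (B3 : INR (2 * m) <= Rpower (2 * s) (8 * gamma)).
  { assert (INR m <= 2 ^ m) by apply INR_le_pow2.
    eapply Rle_trans; [|apply (Rpow_mono s 8); lra].
    replace (Rpower (2 * s) 8) with ((2 * s) ^ 8) by (rewrite <- Rpower_pow by lra; f_equal; simpl; ring). rewrite mult_INR.
    rewrite Rpow_mult_distr. unfold cc, kk in *. simpl (2 ^ 8). simpl (INR 2). nra. }
  assert (B4 : kk s <= Rpower (2 * s) (2 * gamma)).
  { eapply Rle_trans; [|apply (Rpow_mono s 2); lra]. 
    replace (Rpower (2 * s) 2) with ((2 * s) ^ 2) by (rewrite <- Rpower_pow by lra; f_equal; simpl; ring). unfold kk. nra. }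
  assert (Hsf : 0 < sfac) by apply Rpower_pos'.
  assert (Hlg : INR J <= lg alpha).
  { unfold lg. assert (Hl2 : 0 < ln 2) by (rewrite <- ln_1; apply ln_increasing; lra).
    apply Rmult_le_reg_r with (ln 2); auto. unfold Rdiv. rewrite Rmult_assoc, Rinv_l by lra. rewrite Rmult_1_r.
    rewrite <- ln_pow by lra. destruct HJ1 as [HJ1|HJ1]; [left; apply ln_increasing; auto; apply pow_lt; lra|rewrite HJ1; lra]. }
  assert (HlgJ : INR (S J) <= 1 + lg alpha) by (rewrite S_INR; lra).
  assert (HlgJ0 : 0 <= INR (S J)) by apply pos_INR.
  assert (Hg4 : 1 <= gamma ^ 4) by (apply pow_R1_Rle; lra).
  assert (Hg9 : 1 <= gamma ^ 9) by (apply pow_R1_Rle; lra).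
  assert (Hsf17 : Rpower (2 * s) (9 * gamma) * Rpower (2 * s) (8 * gamma) <= sfac).
  { rewrite <- Rpower_plus. apply Rpow_mono; lra. }
  assert (Hsf11 : Rpower (2 * s) (2 * gamma) * Rpower (2 * s) (9 * gamma) <= sfac).
  { rewrite <- Rpower_plus. apply Rpow_mono; lra. }
  assert (Hsf5 : Rpower (2 * s) (5 * gamma) <= sfac) by (apply Rpow_mono; lra).
  assert (HKM1 : 0 <= KK gamma ^ M1) by (apply pow_le; left; apply KK_pos).
  assert (HKM2 : 0 <= KK gamma ^ M2) by (apply pow_le; left; apply KK_pos).
  assert (Hn0 : 0 < n). { unfold n. destruct P; [destruct Hp0|]. simpl length. rewrite S_INR. pose proof (pos_INR (length P)). lra. }
  assert (Hedges : INR (length G) <= n * (2 * sfac)).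
  { eapply Rle_trans; [apply (edge_bound X d Hm gamma Hdb s Hs P HPn G HSep HGP dmin dmax Hdmin0 Hdmin Hdmax J HJ m M1 Hmm HM1)|].
    fold n. apply Rmult_le_compat_l; [lra|].
    assert (0 <= INR (2 * m)) by apply pos_INR.
    assert (KK gamma ^ M1 * INR (2 * m) <= Rpower (2 * s) (9 * gamma) * Rpower (2 * s) (8 * gamma))
      by (apply Rmult_le_compat; auto). lra. }
  split; [|split; [|split; [|split]]].
  - intros p q Hp Hq. apply (stretch_main X d Hm s Hs P ord G Hord' HordP Hcov HG' (S (mu X d ord (d p q)))); auto.
  - change (weight X d G) with (sumR (len X d) G).
    eapply Rle_trans; [apply (weight_bound X d Hm gamma Hdb s Hs P G HSep HGP dmin dmax Hdmin0 Hdmin Hdmax J HJ T mst HW HTc HW0 M1 HM1)|].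
    assert (H16 : 16 * kk s * KK gamma ^ M1 <= 16 * sfac).
    { assert (kk s * KK gamma ^ M1 <= Rpower (2 * s) (2 * gamma) * Rpower (2 * s) (9 * gamma)) by (apply Rmult_le_compat; auto; lra). lra. }
    assert (INR (S J) * (16 * kk s * KK gamma ^ M1 * mst) <= (1 + lg alpha) * (16 * sfac * mst)).
    { apply Rmult_le_compat; auto. apply Rmult_le_pos; [|auto]. nra. apply Rmult_le_compat_r; auto. }
    assert (0 <= (1 + lg alpha) * (16 * sfac * mst)) by (apply Rmult_le_pos; nra).
    assert ((1 + lg alpha) * (16 * sfac * mst) <= gamma ^ 9 * ((1 + lg alpha) * (16 * sfac * mst))).
    { rewrite <- (Rmult_1_l ((1 + lg alpha) * (16 * sfac * mst))) at 1. apply Rmult_le_compat_r; auto. }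
    replace (16 * gamma ^ 9 * (1 + lg alpha) * mst * sfac) with (gamma ^ 9 * ((1 + lg alpha) * (16 * sfac * mst))) by ring.
    lra.
  - assert (n * (2 * sfac) <= gamma ^ 4 * (n * (2 * sfac))).
    { rewrite <- (Rmult_1_l (n * (2 * sfac))) at 1. apply Rmult_le_compat_r; nra. }
    nra.
  - intros v Hv. replace (degree X G v) with (length (filter (fun e => dec (fst e = v \/ snd e = v)) G)) by reflexivity.
    eapply Rle_trans; [apply (degree_bound X d Hm gamma Hdb s Hs G HSep dmin dmax Hdmin0 Hdmin Hdmax J HJ v M2 HM2)|].
    assert (INR (S J) * KK gamma ^ M2 <= (1 + lg alpha) * sfac) by (apply Rmult_le_compat; auto; lra).
    assert (0 <= (1 + lg alpha) * sfac) by nra.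
    assert ((1 + lg alpha) * sfac <= gamma ^ 4 * ((1 + lg alpha) * sfac)).
    { rewrite <- (Rmult_1_l ((1 + lg alpha) * sfac)) at 1. apply Rmult_le_compat_r; auto. }
    nra.
  - assert (2 * INR (length G) / n <= 4 * sfac).
    { apply Rmult_le_reg_r with n; auto. unfold Rdiv. rewrite Rmult_assoc, Rinv_l by lra. nra. }
    assert (4 * sfac <= gamma ^ 4 * (4 * sfac)).
    { rewrite <- (Rmult_1_l (4 * sfac)) at 1. apply Rmult_le_compat_r; lra. }
    nra.
Qed.
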